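(* Assume complete resource pooling. The normalizing constant $B$ of the stationary distributions of the detailed FCFS matching chains is given by $$B=\Big(\prod_{j=1}^J\beta_{s_j}\sum_{(S_1,\ldots,S_J)\in\mathcal{P}_J}\prod_{\ell=1}^{J-1}\big(\beta_{\{S_1,\ldots,S_\ell\}}-\alpha_{\mathcal{U}(\{S_1,\ldots,S_\ell\})}\big)^{-1}\Big)^{-1}=\Big(\prod_{i=1}^I\alpha_{c_i}\sum_{(C_1,\ldots,C_I)\in\mathcal{P}_I}\prod_{\ell=1}^{I-1}\big(\beta_{\mathcal{S}(\{C_1,\ldots,C_\ell\})}-\alpha_{\{C_1,\ldots,C_\ell\}}\big)^{-1}\Big)^{-1},$$ where $\mathcal{P}_J$ is the set of all orderings of $s_1,\ldots,s_J$ and $\mathcal{P}_I$ the set of all orderings of $c_1,\ldots,c_I$.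
   Context: Setting: finite type sets $\mathcal{C}=\{c_1,\ldots,c_I\}$, $\mathcal{S}=\{s_1,\ldots,s_J\}$, connected bipartite compatibility graph $G=(\mathcal{C},\mathcal{S},\mathcal{E})$, independent i.i.d. sequences $(c^m)_{m\in\mathbb{Z}}\sim\alpha$, $(s^n)_{n\in\mathbb{Z}}\sim\beta$, all probabilities positive. $\mathcal{S}(C)$ = server types compatible with some type in $C$; $\mathcal{C}(S)$ = customer types compatible with some type in $S$; $\mathcal{U}(S)=\mathcal{C}\setminus\mathcal{C}(\mathcal{S}\setminus S)$; $\alpha_C,\beta_S$ are sums of probabilities. Complete resource pooling: $\beta_S>\alpha_{\mathcal{U}(S)}$ for all nonempty proper $S\subsetneq\mathcal{S}$. Let $A$ be the a.s. unique (perfect) FCFS matching over $\mathbb{Z}$ (for each $(m,n)\in A$, every compatible $s^l$, $l<n$, is matched to some $c^k$, $k<m$, and every compatible $c^k$, $k<m$, to some $s^l$, $l<n$); set $\tilde{s}^m=s^n$ for $(m,n)\in A$. The server-by-server detailed chain $Z^s_N$: on the customer line position $m$ holds $\tilde{s}^m$ if $c^m$ is matched to a server of index $\le N$, else $c^m$; $Z^s_N$ is the word from the first position holding an unmatched customer to the last position holding an exchanged server (empty if the latter precedes the former). Its stationary distribution is $\pi_{Z^s}(\mathfrak{z})=B\prod_i\alpha_{c_i}^{\#c_i}\prod_j\beta_{s_j}^{\#s_j}$ ($\#$ counting types in $\mathfrak{z}$), and $B$ denotes this normalizing constant. *)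

(* Defs.v *)
From Stdlib Require Import Reals.
From mathcomp Require Import all_boot all_fingroup.
Set Implicit Arguments. Unset Strict Implicit. Unset Printing Implicit Defensive.

Local Open Scope R_scope.

(* Customer types c_1..c_I are 'I_I, server types s_1..s_J are 'I_J;
   the compatibility graph is  E : 'I_I -> 'I_J -> bool. *)

Definition vert (I J : nat) := ('I_I + 'I_J)%type.

Definition adj (I J : nat) (E : 'I_I -> 'I_J -> bool) : rel (vert I J) :=
  fun x y => match x, y with
             | inl i, inr j => E i j
             | inr j, inl i => E i j
             | _, _ => false
             end.

Definition connected_bip (I J : nat) (E : 'I_I -> 'I_J -> bool) : Prop :=
  forall x y : vert I J, connect (adj E) x y.

Definition Sof (I J : nat) (E : 'I_I -> 'I_J -> bool) (C : {set 'I_I}) : {set 'I_J} :=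
  [set j | [exists i in C, E i j]].
Definition Cof (I J : nat) (E : 'I_I -> 'I_J -> bool) (S : {set 'I_J}) : {set 'I_I} :=
  [set i | [exists j in S, E i j]].
Definition Uof (I J : nat) (E : 'I_I -> 'I_J -> bool) (S : {set 'I_J}) : {set 'I_I} :=
  ~: Cof E (~: S).

Definition msum (T : finType) (p : T -> R) (A : {set T}) : R :=
  \big[Rplus/0]_(x in A) p x.

Definition is_prob (T : finType) (p : T -> R) : Prop :=
  (forall x, 0 < p x) /\ \big[Rplus/0]_(x : T) p x = 1.

Definition CRP (I J : nat) (E : 'I_I -> 'I_J -> bool)
    (alpha : 'I_I -> R) (beta : 'I_J -> R) : Prop :=
  forall S : {set 'I_J}, S != set0 -> S != setT ->
    msum alpha (Uof E S) < msum beta S.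

(* States of the server-by-server detailed chain Z^s: words over C + S
   (customer letters = unmatched customers, server letters = exchanged
   servers), either empty, or starting with a customer letter, ending with
   a server letter, and such that no customer letter is compatible with
   any server letter occurring later in the word. *)
Definition is_cust (I J : nat) (x : vert I J) : bool :=
  if x is inl _ then true else false.
Definition is_serv (I J : nat) (x : vert I J) : bool :=
  if x is inr _ then true else false.

Fixpoint no_compat_later (I J : nat) (E : 'I_I -> 'I_J -> bool)
    (w : seq (vert I J)) : bool :=
  match w with
  | [::] => true
  | x :: w' =>
      (if x is inl i then
         all (fun y : vert I J => if y is inr j then ~~ E i j else true) w'
       else true)
      && no_compat_later E w'
  end.

Definition valid_state (I J : nat) (E : 'I_I -> 'I_J -> bool)
    (w : seq (vert I J)) : bool :=
  match w with
  | [::] => true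
  | x :: w' => [&& is_cust x, is_serv (last x w') & no_compat_later E w]
  end.

Definition letter_weight (I J : nat) (alpha : 'I_I -> R) (beta : 'I_J -> R)
    (x : vert I J) : R :=
  match x with inl i => alpha i | inr j => beta j end.

Definition word_weight (I J : nat) (alpha : 'I_I -> R) (beta : 'I_J -> R)
    (w : seq (vert I J)) : R :=
  \big[Rmult/1]_(x <- w) letter_weight alpha beta x.

(* total stationary weight of the states of length n; the normalizing
   constant B is the reciprocal of sum_n (states_weight n) *)
Definition states_weight (I J : nat) (E : 'I_I -> 'I_J -> bool)
    (alpha : 'I_I -> R) (beta : 'I_J -> R) (n : nat) : R :=
  \big[Rplus/0]_(w : n.-tuple (vert I J) | valid_state E w)
     word_weight alpha beta w.

Definition prefix_set (n : nat) (sigma : {perm 'I_n}) (l : nat) : {set 'I_n} :=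
  [set sigma k | k : 'I_n & (k <= l)%N].

Definition Binv_servers (I J : nat) (E : 'I_I -> 'I_J -> bool)
    (alpha : 'I_I -> R) (beta : 'I_J -> R) : R :=
  (\big[Rmult/1]_(j : 'I_J) beta j) *
  \big[Rplus/0]_(sigma : {perm 'I_J})
     \big[Rmult/1]_(l < J.-1)
        / (msum beta (prefix_set sigma l) - msum alpha (Uof E (prefix_set sigma l))).

Definition Binv_customers (I J : nat) (E : 'I_I -> 'I_J -> bool)
    (alpha : 'I_I -> R) (beta : 'I_J -> R) : R :=
  (\big[Rmult/1]_(i : 'I_I) alpha i) *
  \big[Rplus/0]_(sigma : {perm 'I_I})
     \big[Rmult/1]_(l < I.-1)
        / (msum beta (Sof E (prefix_set sigma l)) - msum alpha (prefix_set sigma l)).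

(* Main.v *)
From HB Require Import structures.
Require Import Defs.
From Stdlib Require Import Reals Lra.
From mathcomp Require Import all_boot all_fingroup zify.
Set Implicit Arguments. Unset Strict Implicit. Unset Printing Implicit Defensive.
Local Open Scope R_scope.

Lemma cv_ext (U V : nat -> R) l : (forall n, U n = V n) -> Un_cv U l -> Un_cv V l.
Proof. move=> H C e He; case: (C e He) => N HN; exists N => n Hn; rewrite -H; exact: HN. Qed.

Lemma cv_const c : Un_cv (fun _ => c) c.
Proof. move=> e He; exists 0%nat => n _; rewrite /Rdist Rminus_diag Rabs_R0; lra. Qed.

Lemma is_plus f g a b : infinite_sum f a -> infinite_sum g b ->
  infinite_sum (fun n => f n + g n) (a + b).
Proof.
move=> Hf Hg; have := CV_plus _ _ _ _ Hf Hg.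
apply: cv_ext => n; by rewrite sum_plus.
Qed.

Lemma is_scal f a c : infinite_sum f a -> infinite_sum (fun n => c * f n) (c * a).
Proof.
move=> Hf; have := CV_mult _ _ _ _ (cv_const c) Hf.
apply: cv_ext => n; rewrite scal_sum; apply PartSum.sum_eq; intros; apply Rmult_comm.
Qed.

Lemma is_zero : infinite_sum (fun _ => 0) 0.
Proof.
have := cv_const 0; apply: cv_ext; elim=> [|n IH] //=; rewrite -IH; lra.
Qed.

Lemma is_head c : infinite_sum (fun n => if n is 0%nat then c else 0) c.
Proof.
have := cv_const c; apply: cv_ext; elim=> [|n IH] //=; rewrite -IH; lra.
Qed.

Lemma is_ext f g a : (forall n, f n = g n) -> infinite_sum f a -> infinite_sum g a.
Proof. move=> H; apply: cv_ext => n; apply PartSum.sum_eq; intros; apply H. Qed.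

Lemma sum_shift f N : sum_f_R0 f (S N) = f 0%nat + sum_f_R0 (fun n => f (S n)) N.
Proof. elim: N => [|N IH] /=; first lra. rewrite /= in IH; rewrite IH; lra. Qed.

Lemma is_shift f a : infinite_sum f a -> infinite_sum (fun n => f (S n)) (a - f 0%nat).
Proof.
move=> H; have H1 : Un_cv (fun n => sum_f_R0 f (n + 1)) a by exact: CV_shift'.
have := CV_plus _ _ _ _ H1 (cv_const (- f 0%nat)).
apply: cv_ext => n; rewrite addn1 sum_shift; lra.
Qed.

Lemma is_unshift f a : infinite_sum (fun n => f (S n)) a -> infinite_sum f (a + f 0%nat).
Proof.
move=> H; apply: (CV_shift _ 1).
have := CV_plus _ _ _ _ H (cv_const (f 0%nat)).
apply: cv_ext => n; rewrite Nat.add_1_r sum_shift; lra.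
Qed.

Lemma is_unique f a b : infinite_sum f a -> infinite_sum f b -> a = b.
Proof. exact: UL_sequence. Qed.

Lemma is_recur (x b : nat -> R) rho B :
  x 0%nat = 0 -> (forall n, x (S n) = rho * x n + b n) -> 0 <= rho < 1 ->
  (forall n, 0 <= x n) -> (forall n, 0 <= b n) -> infinite_sum b B ->
  infinite_sum x (B / (1 - rho)).
Proof.
move=> x0 xS Hr xp bp Hb.
have PS : forall N, sum_f_R0 x (S N) = rho * sum_f_R0 x N + sum_f_R0 b N.
  elim=> [|N IH] /=; first by rewrite xS x0; lra.
  rewrite /= in IH; rewrite (xS (S N)); lra.
have Bb : forall N, sum_f_R0 b N <= B by move=> N; apply: sum_incr.
have gr : Un_growing (sum_f_R0 x) by move=> n; have h := xp (S n); rewrite /=; lra.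
have ub : forall N, sum_f_R0 x N <= B / (1 - rho).
  move=> N; have h1 := PS N; have h2 := Bb N; have h3 := gr N.
  apply: (Rmult_le_reg_r (1 - rho)); first lra.
  rewrite /Rdiv Rmult_assoc Rinv_l; last lra. 
  rewrite Rmult_1_r; have h4 : sum_f_R0 x N <= sum_f_R0 x N.+1 by []. nra.
have [l Hl] : {l | Un_cv (sum_f_R0 x) l}.
  apply: growing_cv => //; exists (B / (1 - rho)) => y [N ->]; exact: ub.
have H1 : Un_cv (fun n => sum_f_R0 x (n + 1)) l by exact: CV_shift'.
have H2 := CV_plus _ _ _ _ (CV_mult _ _ _ _ (cv_const rho) Hl) Hb.
have E : l = rho * l + B.
  apply: (UL_sequence _ _ _ H1); move: H2; apply: cv_ext => n.
  by rewrite addn1 PS.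
have -> : B / (1 - rho) = l.
  apply: (Rmult_eq_reg_r (1 - rho)); last lra.
  rewrite /Rdiv Rmult_assoc Rinv_l; lra.
exact: Hl.
Qed.

Lemma is_bigsum (T : Type) (r : seq T) (P : pred T) (F : T -> nat -> R) (L : T -> R) :
  (forall i, P i -> infinite_sum (F i) (L i)) ->
  infinite_sum (fun n => \big[Rplus/0]_(i <- r | P i) F i n) (\big[Rplus/0]_(i <- r | P i) L i).
Proof.
move=> H; elim: r => [|x r IH].
  rewrite big_nil; apply: is_ext is_zero => n; by rewrite big_nil.
rewrite big_cons; case Px: (P x).
  apply: is_ext (is_plus (H x Px) IH) => n; by rewrite big_cons Px.
apply: is_ext IH => n; by rewrite big_cons Px.
Qed.

Lemma is_ext2 f g a b : (forall n, f n = g n) -> a = b -> infinite_sum f a -> infinite_sum g b.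
Proof. move=> H <-; exact: is_ext. Qed.

HB.instance Definition _ := Monoid.isComLaw.Build R 0 Rplus (fun x y z => esym (Rplus_assoc x y z)) Rplus_comm Rplus_0_l.
HB.instance Definition _ := Monoid.isComLaw.Build R 1 Rmult (fun x y z => esym (Rmult_assoc x y z)) Rmult_comm Rmult_1_l.
HB.instance Definition _ := Monoid.isMulLaw.Build R 0 Rmult Rmult_0_l Rmult_0_r.
HB.instance Definition _ := Monoid.isAddLaw.Build R Rmult Rplus Rmult_plus_distr_r Rmult_plus_distr_l.

Lemma test (T : finType) (F : T -> R) c : c * \big[Rplus/0]_(i : T) F i = \big[Rplus/0]_i (c * F i).
Proof. by rewrite big_distrr. Qed.

Definition ends_serv I J (w : seq (vert I J)) :=
  if w is x :: w' then is_serv (last x w') else false.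
Definition serv_ok I J (E : 'I_I -> 'I_J -> bool) (C : {set 'I_I}) (y : vert I J) :=
  if y is inr j then j \notin Sof E C else true.
Definition good I J (E : 'I_I -> 'I_J -> bool) C (w : seq (vert I J)) :=
  [&& ends_serv w, no_compat_later E w & all (serv_ok E C) w].
Definition En I J (E : 'I_I -> 'I_J -> bool) (alpha : 'I_I -> R) (beta : 'I_J -> R) C n :=
  \big[Rplus/0]_(w : n.-tuple (vert I J) | good E C w) word_weight alpha beta w.

Lemma Sof_U1 I J (E : 'I_I -> 'I_J -> bool) i C j :
  (j \in Sof E (i |: C)) = E i j || (j \in Sof E C).
Proof.
rewrite !inE; apply/existsP/idP.
  case=> i' /andP[]; rewrite !inE => /orP[/eqP-> -> //|Hi Ei]; apply/orP; right.
  by apply/existsP; exists i'; rewrite Hi.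
case/orP=> [Eij|/existsP[i' /andP[Hi Ei]]]; first by exists i; rewrite !inE eqxx.
by exists i'; rewrite !inE Hi orbT.
Qed.

Lemma good_inl I J (E : 'I_I -> 'I_J -> bool) C i w :
  good E C (inl i :: w) = good E (i |: C) w.
Proof.
rewrite /good; have -> : ends_serv (inl i :: w) = ends_serv w by case: w.
rewrite /=.
have -> : all (serv_ok E (i |: C)) w =
   all (fun y : vert I J => if y is inr j then ~~ E i j else true) w && all (serv_ok E C) w.
  rewrite -all_predI; apply: eq_all => -[i'|j] //=; by rewrite Sof_U1 negb_or.
by case: (ends_serv w); case: (all _ w); case: (no_compat_later E w); case: (all _ w).
Qed.

Lemma good_inr I J (E : 'I_I -> 'I_J -> bool) C j w :
  good E C (inr j :: w) = (j \notin Sof E C) && (nilp w || good E C w).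
Proof.
rewrite /good /=; case: w => [|y w] /=; first by rewrite andbT.
by case: (j \in Sof E C); rewrite ?andbF //= ?andbT; case: (is_serv _); case: (_ && _).
Qed.

Lemma big_tuple_cons (T : finType) n (P : seq T -> bool) (F : seq T -> R) :
  \big[Rplus/0]_(w : n.+1.-tuple T | P w) F w =
  \big[Rplus/0]_(x : T) \big[Rplus/0]_(w : n.-tuple T | P (x :: w)) F (x :: w).
Proof.
rewrite pair_big_dep /=.
rewrite (reindex (fun p : T * n.-tuple T => [tuple of p.1 :: p.2])) /=.
  by apply: eq_bigl => -[x w].
exists (fun t : n.+1.-tuple T => (thead t, [tuple of behead t])) => [[x w] _|t _] /=.
  by congr (_, _); apply: val_inj.
by rewrite [RHS]tuple_eta.
Qed.

Lemma big_tuple0 (T : finType) (P : seq T -> bool) (F : seq T -> R) :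
  \big[Rplus/0]_(w : 0.-tuple T | P w) F w = if P [::] then F [::] else 0.
Proof.
rewrite big_mkcond (big_pred1 [tuple]) // => t; rewrite /= [t]tuple0; symmetry; by apply/eqP.
Qed.

Lemma ww_cons I J (alpha : 'I_I -> R) (beta : 'I_J -> R) x w :
  word_weight alpha beta (x :: w) = letter_weight alpha beta x * word_weight alpha beta w.
Proof. by rewrite /word_weight big_cons. Qed.

Lemma En0 I J (E : 'I_I -> 'I_J -> bool) alpha beta C : En E alpha beta C 0 = 0.
Proof. by rewrite /En big_tuple0. Qed.

Lemma EnS I J (E : 'I_I -> 'I_J -> bool) alpha beta C n :
  En E alpha beta C n.+1 =
  \big[Rplus/0]_(i : 'I_I) (alpha i * En E alpha beta (i |: C) n) +
  \big[Rplus/0]_(j : 'I_J) ((if j \in Sof E C then 0 else beta j) *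
                            (if n is 0 then 1 else En E alpha beta C n)).
Proof.
rewrite /En big_tuple_cons big_sumType; congr (_ + _).
  apply: eq_bigr => i _; rewrite big_distrr /=; apply: eq_big => [w|w _].
    by rewrite good_inl.
  by rewrite ww_cons.
apply: eq_bigr => j _.
under eq_bigl do rewrite good_inr.
under eq_bigr do rewrite ww_cons.
case: (j \in Sof E C) => /=.
  by rewrite big_pred0 // Rmult_0_l.
case: n => [|m].
  by rewrite (big_tuple0 (fun w => nilp w || good E C w) (fun w => beta j * word_weight alpha beta w)) /= /word_weight big_nil.
rewrite big_distrr; apply: eq_bigl => w /=; by case: w => -[|x s].

Qed.

Lemma msumC (T : finType) (p : T -> R) (A : {set T}) :
  is_prob p -> msum p (~: A) = 1 - msum p A.
Proof.
case=> _ H1; rewrite -H1 /msum (bigID (mem A) predT) /=.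
have -> : \big[Rplus/0]_(i in ~: A) p i = \big[Rplus/0]_(i | ~~ (i \in A)) p i.
  by apply: eq_bigl => i; rewrite inE.
lra.
Qed.

Lemma msum_ge0 (T : finType) (p : T -> R) (A : {set T}) :
  (forall x, 0 <= p x) -> 0 <= msum p A.
Proof.
move=> H; rewrite /msum; elim/big_ind: _ => //; [lra | move=> x y; lra].
Qed.

Lemma ww_ge0 I J (alpha : 'I_I -> R) (beta : 'I_J -> R) w :
  (forall i, 0 <= alpha i) -> (forall j, 0 <= beta j) -> 0 <= word_weight alpha beta w.
Proof.
move=> Ha Hb; rewrite /word_weight; elim/big_ind: _ => //; first lra.
  by move=> x y; apply: Rmult_le_pos.
by move=> -[a|b] _ /=.
Qed.

Lemma En_ge0 I J (E : 'I_I -> 'I_J -> bool) alpha beta C n :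
  (forall i, 0 <= alpha i) -> (forall j, 0 <= beta j) -> 0 <= En E alpha beta C n.
Proof.
move=> Ha Hb; rewrite /En; elim/big_ind: _ => //; first lra.
  move=> x y; lra.
by move=> w _; apply: ww_ge0.
Qed.

Lemma Sof0 I J (E : 'I_I -> 'I_J -> bool) : Sof E set0 = set0.
Proof. apply/setP => j; rewrite !inE; apply/existsP => -[i]; by rewrite inE. Qed.

Lemma valid_inl I J (E : 'I_I -> 'I_J -> bool) i w :
  valid_state E (inl i :: w) = good E [set i] w.
Proof.
have -> : [set i] = i |: set0 by rewrite setU0.
have Hs : all (serv_ok E set0) w by apply/allP => -[x|j] _ //=; rewrite Sof0 inE.
rewrite -good_inl /good /valid_state /= Hs; by case: (no_compat_later _ _); rewrite ?andbT ?andbF.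
Qed.

Lemma sw0 I J (E : 'I_I -> 'I_J -> bool) alpha beta : states_weight E alpha beta 0 = 1.
Proof. by rewrite /states_weight big_tuple0 /= /word_weight big_nil. Qed.

Lemma swS I J (E : 'I_I -> 'I_J -> bool) alpha beta n :
  states_weight E alpha beta n.+1 =
  \big[Rplus/0]_(i : 'I_I) (alpha i * En E alpha beta [set i] n).
Proof.
rewrite /states_weight big_tuple_cons big_sumType.
rewrite [X in _ + X = _]big1 ?Rplus_0_r; last by move=> j _; rewrite big_pred0.
apply: eq_bigr => i _; rewrite /En big_distrr; apply: eq_big => w.
  by rewrite valid_inl.
by rewrite ww_cons.
Qed.

Definition kf I J (E : 'I_I -> 'I_J -> bool) (alpha : 'I_I -> R) (beta : 'I_J -> R) C :=
  msum beta (Sof E C) - msum alpha C.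

Fixpoint Om I J (E : 'I_I -> 'I_J -> bool) (alpha : 'I_I -> R) (beta : 'I_J -> R)
    (m : nat) (C : {set 'I_I}) : R :=
  match m with
  | 0 => 1
  | m'.+1 => / kf E alpha beta C * \big[Rplus/0]_(i in ~: C) Om E alpha beta m' (i |: C)
  end.

Definition Vv I J (E : 'I_I -> 'I_J -> bool) (alpha : 'I_I -> R) (beta : 'I_J -> R) C :=
  \big[Rmult/1]_(i in ~: C) alpha i * Om E alpha beta #|~: C| C - 1.

Lemma setC_U1 I (C : {set 'I_I}) i : ~: (i |: C) = (~: C) :\ i.
Proof. apply/setP => x; rewrite !inE negb_or andbC. by []. Qed.

Lemma card_C_U1 I (C : {set 'I_I}) i : i \in ~: C -> #|~: (i |: C)| = #|~: C|.-1.
Proof. move=> Hi; by rewrite setC_U1 (cardsD1 i (~: C)) Hi. Qed.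

Lemma En_T I J (E : 'I_I -> 'I_J -> bool) alpha beta n :
  (forall j, j \in Sof E setT) -> En E alpha beta setT n = 0.
Proof.
move=> Hn; rewrite /En big_pred0 // => w.
apply/negP => /and3P[]; case: (val w) => [|x s] // Hl _ Hall.
have := allP Hall _ (mem_last x s).
move: Hl => /=; case: (last x s) => // j _ /=; by rewrite Hn.
Qed.

Lemma setU1_in I (C : {set 'I_I}) i : i \in C -> i |: C = C.
Proof. move=> Hi; apply/setP => y; rewrite !inE; case: eqP => // ->; by rewrite Hi. Qed.

Lemma sum_opp (T : Type) (r : seq T) (P : pred T) (F : T -> R) :
  \big[Rplus/0]_(i <- r | P i) (- F i) = - \big[Rplus/0]_(i <- r | P i) F i.
Proof. symmetry; apply: (big_morph Ropp Ropp_plus_distr Ropp_0). Qed.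

Lemma ar1 (a b S : R) : a * 0 + S + b * 1 = (a + b) * 0 + (S + b).
Proof. ring. Qed.
Lemma ar2 (a b S X : R) : a * X + S + b * X = (a + b) * X + (S + 0).
Proof. ring. Qed.

Lemma ar3 (a Q O : R) : a * (Q * O - 1) = (a * Q) * O + - a.
Proof. ring. Qed.
Lemma ar4 (P SO aC acC bS bcS : R) : acC = 1 - aC -> bcS = 1 - bS -> 0 < bS - aC ->
  P * (/(bS - aC) * SO) - 1 = (P * SO + - acC + bcS) / (1 - (aC + bcS)).
Proof. move=> -> -> H; field; lra. Qed.

Lemma EnV I J (E : 'I_I -> 'I_J -> bool) alpha beta :
  is_prob alpha -> is_prob beta -> (forall j, j \in Sof E setT) ->
  (forall C, C != set0 -> C != setT -> 0 < kf E alpha beta C) ->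
  forall m C, #|~: C| = m -> C != set0 ->
  infinite_sum (En E alpha beta C) (Vv E alpha beta C).
Proof.
move=> Ha Hb Hn Hk.
have ap : forall i, 0 <= alpha i by move=> i; case: Ha => H _; apply: Rlt_le.
have bp : forall j, 0 <= beta j by move=> j; case: Hb => H _; apply: Rlt_le.
elim=> [|m IH] C Hc HC0.
  have CT : C = setT.
    move/eqP: Hc; rewrite cards_eq0 => /eqP H; by rewrite -(setCK C) H setC0.
  subst C; rewrite /Vv Hc /= setCT big_set0.
  apply: (is_ext2 _ _ is_zero) => [n|]; [by rewrite En_T | rewrite /=; lra].
have CT : C != setT by apply/eqP => CT; move: Hc; rewrite CT setCT cards0.
have kp := Hk C HC0 CT.
set rho := msum alpha C + msum beta (~: Sof E C).
set b := fun n => \big[Rplus/0]_(i in ~: C) (alpha i * En E alpha beta (i |: C) n) +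
                  (if n is 0 then msum beta (~: Sof E C) else 0).
set B := \big[Rplus/0]_(i in ~: C) (alpha i * Vv E alpha beta (i |: C)) + msum beta (~: Sof E C).
have Hrho : 0 <= rho < 1.
  rewrite /rho msumC // /kf; have := msum_ge0 C ap; have := msum_ge0 (Sof E C) bp.
  rewrite /kf in kp; move=> h1 h2; have h3 := msum_ge0 (~: Sof E C) bp; rewrite msumC // in h3.
cbv [reverse_coercion] in *; lra.
have Hbs : infinite_sum b B.
  apply: is_plus; last exact: is_head.
  apply: is_bigsum => i Hi; apply: is_scal; apply: IH.
    by rewrite card_C_U1 // Hc.
  by apply/set0Pn; exists i; rewrite setU11.
have Hrec := is_recur (En0 E alpha beta C) _ Hrho (fun n => En_ge0 E C n ap bp) _ Hbs.
have -> : Vv E alpha beta C = B / (1 - rho).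
  set P := \big[Rmult/1]_(i in ~: C) alpha i.
  have E1 : forall i, i \in ~: C ->
      alpha i * Vv E alpha beta (i |: C) = P * Om E alpha beta m (i |: C) + - alpha i.
    move=> i Hi; rewrite /Vv card_C_U1 // Hc /= /P (big_setD1 i Hi) setC_U1 /=.
    exact: ar3.
  rewrite /B (eq_bigr _ E1) big_split /= -big_distrr sum_opp /Vv Hc /= -/P.
  apply: ar4; [exact: msumC | exact: msumC | rewrite /kf in kp; lra].
apply: Hrec.
  move=> n; rewrite EnS /b /rho.
  rewrite (bigID (mem C) predT) /=.
  have -> : \big[Rplus/0]_(i | true && (i \in C)) (alpha i * En E alpha beta (i |: C) n) =
            msum alpha C * En E alpha beta C n.
    rewrite /msum big_distrl; apply: eq_bigr => i /= Hi; by rewrite setU1_in.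
  have -> : \big[Rplus/0]_(i | true && ~~ (i \in C)) (alpha i * En E alpha beta (i |: C) n) =
            \big[Rplus/0]_(i in ~: C) (alpha i * En E alpha beta (i |: C) n).
    by apply: eq_bigl => i; rewrite inE.
  have -> : forall t, \big[Rplus/0]_(j : 'I_J) ((if j \in Sof E C then 0 else beta j) * t) =
            msum beta (~: Sof E C) * t.
    move=> t; rewrite /msum big_distrl [RHS]big_mkcond; apply: eq_bigr => j _ /=.
    rewrite in_setC; case: (j \in Sof E C) => /=; lra.
  case: n => [|n]; rewrite ?En0.
    exact: ar1.
  exact: ar2.
move=> n; rewrite /b; apply: Rplus_le_le_0_compat.
  elim/big_ind: _ => //; [lra | move=> x y; lra | move=> i _; apply: Rmult_le_pos => //; exact: En_ge0].
case: n => [|n]; [exact: msum_ge0 | lra].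
Qed.

Lemma set_cons (T : finType) (x : T) (s : seq T) : [set y in x :: s] = x |: [set y in s].
Proof. by apply/setP => y; rewrite !inE. Qed.

Lemma set_nil (T : finType) : [set y in [::] : seq T] = set0.
Proof. by apply/setP => y; rewrite !inE. Qed.

Definition Ptup I (C : {set 'I_I}) (t : seq 'I_I) := uniq t && all (fun x => x \notin C) t.
Definition Ftup I J (E : 'I_I -> 'I_J -> bool) alpha beta m (C : {set 'I_I}) (t : seq 'I_I) :=
  \big[Rmult/1]_(l < m) / kf E alpha beta (C :|: [set x in take l t]).

Lemma Om_tuple I J (E : 'I_I -> 'I_J -> bool) alpha beta :
  forall m C, #|~: C| = m ->
  Om E alpha beta m C =
  \big[Rplus/0]_(t : m.-tuple 'I_I | Ptup C t) Ftup E alpha beta m C t.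
Proof.
elim=> [|m IH] C Hc.
  by rewrite big_tuple0 /Ftup /= big_ord0.
rewrite big_tuple_cons /= big_distrr [LHS]big_mkcond /=; apply: eq_bigr => x _.
rewrite in_setC; case: (boolP (x \in C)) => Hx /=.
  by rewrite big_pred0 // => t; rewrite /Ptup /= Hx /= andbF.
rewrite IH; last by rewrite card_C_U1 ?in_setC // Hc.
rewrite big_distrr; apply: eq_big => [t|t _].
  rewrite /Ptup /= Hx /=.
  have -> : all (fun y => y \notin x |: C) t = (x \notin t) && all (fun y => y \notin C) t.
    rewrite -has_pred1 -all_predC -all_predI; apply: eq_all => y /=.
    by rewrite !inE negb_or eq_sym.
  by case: (uniq t); case: (x \in t); case: (all _ t).
rewrite /Ftup big_ord_recl /= set_nil setU0; congr (_ * _); apply: eq_bigr => l _.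
by rewrite set_cons setUA [C :|: [set x]]setUC.
Qed.

Lemma perm_tuple_sum n (G : seq 'I_n -> R) :
  \big[Rplus/0]_(s : {perm 'I_n}) G [seq s i | i <- enum 'I_n] =
  \big[Rplus/0]_(t : n.-tuple 'I_n | uniq t) G t.
Proof.
pose h (s : {perm 'I_n}) := [tuple s i | i < n].
have hv : forall s, val (h s) = [seq s i | i <- enum 'I_n] by [].
have hinj : injective h.
  move=> s1 s2 E; apply/permP => i.
  by rewrite -(tnth_mktuple s1 i) -(tnth_mktuple s2 i) -/(h s1) -/(h s2) E.
rewrite (eq_bigl (mem (h @: setT))); last first.
  move=> t; rewrite /= -[RHS]/(t \in h @: setT).
  apply/idP/imsetP.
    move/tuple_uniqP => tinj; exists (perm tinj) => //.
    by apply: eq_from_tnth => i; rewrite tnth_mktuple permE.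
  case=> s _ ->; rewrite hv map_inj_uniq ?enum_uniq //; exact: perm_inj.
rewrite big_imset /=; last by move=> s1 s2 _ _; exact: hinj.
by apply: eq_bigl => s; rewrite inE.
Qed.

Lemma prefix_take n (s : {perm 'I_n}) l :
  prefix_set s l = [set y in take l.+1 [seq s i | i <- enum 'I_n]].
Proof.
apply/setP => y; rewrite inE -map_take; apply/imsetP/mapP.
  case=> k; rewrite inE => Hk ->; exists k => //.
  by rewrite in_take ?mem_enum // index_enum_ord ltnS.
case=> k; rewrite in_take ?mem_enum // index_enum_ord ltnS => Hk ->.
by exists k; rewrite ?inE.
Qed.

Lemma perm_Om I J (E : 'I_I -> 'I_J -> bool) alpha beta : (0 < I)%N ->
  \big[Rplus/0]_(s : {perm 'I_I}) \big[Rmult/1]_(l < I.-1) / kf E alpha beta (prefix_set s l) =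
  \big[Rplus/0]_(i : 'I_I) Om E alpha beta I.-1 [set i].
Proof.
case: I E alpha beta => [|n] E alpha beta // _.
pose G (t : seq 'I_n.+1) := \big[Rmult/1]_(l < n) / kf E alpha beta [set y in take l.+1 t].
have -> : \big[Rplus/0]_(s : {perm 'I_n.+1}) \big[Rmult/1]_(l < n.+1.-1)
     / kf E alpha beta (prefix_set s l) =
   \big[Rplus/0]_(s : {perm 'I_n.+1}) G [seq s i | i <- enum 'I_n.+1].
  apply: eq_bigr => s _; apply: eq_bigr => l _; by rewrite prefix_take.
rewrite perm_tuple_sum big_tuple_cons; apply: eq_bigr => x _.
rewrite Om_tuple; last by rewrite cardsC1 card_ord.
apply: eq_big => [t|t _].
  rewrite /Ptup /= andbC; congr (_ && _).
  rewrite -has_pred1 -all_predC; apply: eq_all => y /=; by rewrite inE eq_sym.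
rewrite /G /Ftup; apply: eq_bigr => l _; by rewrite /= set_cons.
Qed.

Lemma ar5 (P S s : R) : s = 1 -> P * S + - s + 1 = P * S.
Proof. move=> ->; ring. Qed.

Lemma cust_main I J (E : 'I_I -> 'I_J -> bool) alpha beta :
  is_prob alpha -> is_prob beta -> (forall j, j \in Sof E setT) ->
  (forall C, C != set0 -> C != setT -> 0 < kf E alpha beta C) ->
  infinite_sum (states_weight E alpha beta) (Binv_customers E alpha beta).
Proof.
move=> Ha Hb Hn Hk.
have I0 : (0 < I)%N.
  rewrite lt0n; apply/eqP => I0; case: Ha => _; rewrite big_pred0 => [|i]; first lra.
  by case: i; rewrite I0.
have H1 : infinite_sum (fun n => states_weight E alpha beta n.+1)
    (\big[Rplus/0]_(i : 'I_I) (alpha i * Vv E alpha beta [set i])).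
  apply: (is_ext (f := fun n => \big[Rplus/0]_(i : 'I_I) (alpha i * En E alpha beta [set i] n))).
    by move=> n; rewrite swS.
  apply: is_bigsum => i _; apply: is_scal; apply: (EnV Ha Hb Hn Hk (erefl _)).
  by apply/set0Pn; exists i; exact: set11.
apply: is_ext2 (is_unshift H1) => //.
rewrite sw0 /Binv_customers.
have -> : \big[Rplus/0]_(sigma : {perm 'I_I})
     \big[Rmult/1]_(l < I.-1)
        / (msum beta (Sof E (prefix_set sigma l)) - msum alpha (prefix_set sigma l)) =
   \big[Rplus/0]_(i : 'I_I) Om E alpha beta I.-1 [set i] := perm_Om E alpha beta I0.
set P := \big[Rmult/1]_(i : 'I_I) alpha i.
have E1 : forall i : 'I_I, alpha i * Vv E alpha beta [set i] = P * Om E alpha beta I.-1 [set i] + - alpha i.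
  move=> i; rewrite /Vv cardsC1 card_ord /P [in RHS](bigD1 i) //=.
  rewrite [in LHS](eq_bigl (fun x => x != i)); last by move=> x; rewrite !inE.
  exact: ar3.
rewrite (eq_bigr _ (fun i _ => E1 i)) big_split /= -big_distrr sum_opp.
apply: ar5; by case: Ha.
Qed.

Definition swapv (A B : Type) (x : A + B) : B + A :=
  match x with inl a => inr a | inr b => inl b end.

Lemma swapvK (A B : Type) (x : A + B) : swapv (swapv x) = x.
Proof. by case: x. Qed.

Lemma ncl_rcons I J (E : 'I_I -> 'I_J -> bool) (s : seq (vert I J)) y :
  no_compat_later E (rcons s y) = no_compat_later E s &&
    (if y is inr j then all (fun z : vert I J => if z is inl i then ~~ E i j else true) s else true).
Proof.
elim: s => [|x s IH] /=; first by case: y.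
rewrite IH; case: x => [i|j] /=; last by [].
rewrite all_rcons; clear IH; case: y => [i0|j] /=; first by rewrite !andbT.
by case: (E i j); case: (all _ s); case: (no_compat_later E s); case: (all _ s).
Qed.

Lemma ncl_rev I J (E : 'I_I -> 'I_J -> bool) (w : seq (vert I J)) :
  no_compat_later (fun j i => E i j) (rev (map (@swapv _ _) w)) = no_compat_later E w.
Proof.
elim: w => [|x w IH] //=.
rewrite rev_cons ncl_rcons IH; case: x => [i|j] /=; last by rewrite andbT.
rewrite andbC; congr (_ && _); rewrite all_rev all_map; apply: eq_all => -[a|b] //.
Qed.

Lemma valid_rev I J (E : 'I_I -> 'I_J -> bool) (w : seq (vert I J)) :
  valid_state (fun j i => E i j) (rev (map (@swapv _ _) w)) = valid_state E w.
Proof.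
case: w => [|x w] //.
case/lastP: w => [|w y]; first by case: x.
rewrite /valid_state -[no_compat_later E _]ncl_rev.
have -> : rev (map (@swapv _ _) (x :: rcons w y)) =
   swapv y :: rcons (rev (map (@swapv _ _) w)) (swapv x).
  by rewrite map_cons map_rcons rev_cons rev_rcons rcons_cons.
rewrite /= !last_rcons.
by case: x; case: y.
Qed.

Lemma ww_rev I J (alpha : 'I_I -> R) (beta : 'I_J -> R) (w : seq (vert I J)) :
  word_weight beta alpha (rev (map (@swapv _ _) w)) = word_weight alpha beta w.
Proof.
rewrite /word_weight big_rev big_map; apply: eq_bigr => -[i|j] _ //.
Qed.

Lemma sw_tr I J (E : 'I_I -> 'I_J -> bool) alpha beta n :
  states_weight E alpha beta n = states_weight (fun j i => E i j) beta alpha n.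
Proof.
rewrite /states_weight.
pose h (w : n.-tuple (vert I J)) : n.-tuple (vert J I) := [tuple of rev (map (@swapv _ _) w)].
rewrite (reindex h) /=.
  by apply: eq_big => w; rewrite ?valid_rev // ?ww_rev.
exists (fun w : n.-tuple (vert J I) => [tuple of rev (map (@swapv _ _) w)] : n.-tuple (vert I J)).
  move=> w _; apply: val_inj => /=; by rewrite map_rev revK -map_comp map_id_in // => x _; rewrite /= swapvK.
move=> w _; apply: val_inj => /=; by rewrite map_rev revK -map_comp map_id_in // => x _; rewrite /= swapvK.
Qed.

Lemma mem_prefix n (s : {perm 'I_n}) l y : (y \in prefix_set s l) = ((s^-1)%g y <= l)%N.
Proof.
apply/imsetP/idP.
  case=> k; rewrite inE => Hk ->; by rewrite permK.
by move=> H; exists ((s^-1)%g y); rewrite ?inE ?permKV.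
Qed.

Lemma ar6 (x y : R) : x - (1 - y) = y - (1 - x).
Proof. ring. Qed.

Lemma Binv_tr I J (E : 'I_I -> 'I_J -> bool) alpha beta :
  is_prob alpha -> is_prob beta ->
  Binv_servers E alpha beta = Binv_customers (fun j i => E i j) beta alpha.
Proof.
move=> Ha Hb; rewrite /Binv_servers /Binv_customers; congr (_ * _).
pose D (P : {set 'I_J}) := msum alpha (Sof (fun j i => E i j) P) - msum beta P.
transitivity (\big[Rplus/0]_(s : {perm 'I_J}) \big[Rmult/1]_(l < J.-1) / D (~: prefix_set s l)).
  apply: eq_bigr => s _; apply: eq_bigr => l _; congr (/ _).
  rewrite /D /Uof (msumC (Cof E (~: prefix_set s l)) Ha) (msumC (prefix_set s l) Hb).
  exact: ar6.
pose r : {perm 'I_J} := perm (@rev_ord_inj J).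
have rinv : forall z, (r^-1)%g z = rev_ord z.
  by move=> z; apply: (@perm_inj _ r); rewrite permKV permE rev_ordK.
rewrite [RHS](reindex_inj (fingroup.mulgI r)) /=; apply: eq_bigr => s _.
rewrite [RHS](reindex_inj rev_ord_inj) /=; apply: eq_bigr => l _.
rewrite /D; congr (/ (_ - _)); [congr (msum _ (Sof _ _)) | congr (msum _ _)];
  apply/setP => y; rewrite in_setC !mem_prefix invMg permM rinv;
  move: ((s^-1)%g y) => m; have := ltn_ord m; have := ltn_ord l; rewrite /=;
  move=> h1 h2; apply/idP/idP; lia.
Qed.

Lemma prob_pos n (p : 'I_n -> R) : is_prob p -> (0 < n)%N.
Proof.
move=> Ha; rewrite lt0n; apply/eqP => I0; case: Ha => _; rewrite big_pred0 => [|i]; first lra.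
by case: i; rewrite I0.
Qed.

Lemma nbr_serv I J (E : 'I_I -> 'I_J -> bool) :
  connected_bip E -> (0 < I)%N -> forall j, j \in Sof E setT.
Proof.
move=> Hc I0 j; have := Hc (inr j) (inl (Ordinal I0)).
case/connectP => -[|y p] /=; first by [].
case/andP; case: y => [i|j'] //= Eij _ _.
by rewrite inE; apply/existsP; exists i; rewrite inE.
Qed.

Lemma nbr_cust I J (E : 'I_I -> 'I_J -> bool) :
  connected_bip E -> (0 < J)%N -> forall i, i \in Cof E setT.
Proof.
move=> Hc J0 i; have := Hc (inl i) (inr (Ordinal J0)).
case/connectP => -[|y p] /=; first by [].
case/andP; case: y => [i'|j] //= Eij _ _.
by rewrite inE; apply/existsP; exists j; rewrite inE.
Qed.

Lemma msum_gt0 (T : finType) (p : T -> R) (A : {set T}) :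
  (forall x, 0 < p x) -> A != set0 -> 0 < msum p A.
Proof.
move=> Hp /set0Pn[x Hx]; rewrite /msum (big_setD1 x Hx) /=.
have := Hp x; have : 0 <= \big[Rplus/0]_(i in A :\ x) p i.
  elim/big_ind: _ => //; [lra | move=> a b; lra | move=> i _; apply: Rlt_le; exact: Hp].
move=> h1 h2; lra.
Qed.

Lemma msum_sub (T : finType) (p : T -> R) (A B : {set T}) :
  (forall x, 0 <= p x) -> A \subset B -> msum p A <= msum p B.
Proof.
move=> Hp HAB; rewrite /msum (big_setID (A := B) A) /= (setIidPr HAB).
have : 0 <= \big[Rplus/0]_(i in B :\: A) p i.
  elim/big_ind: _; [lra | move=> a b; lra | move=> i _; exact: Hp].
move=> h; lra.
Qed.

Lemma msumT (T : finType) (p : T -> R) : is_prob p -> msum p setT = 1.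
Proof.
move=> Hp; rewrite -setC0 msumC // /msum big_pred0 => [|x]; first lra.
by rewrite inE.
Qed.

Lemma ar7 (a u b : R) : a <= u -> u < b -> 0 < b - a.
Proof. lra. Qed.
Lemma ar8 (a : R) : 0 < a -> 0 < 1 - (1 - a).
Proof. lra. Qed.
Lemma ar9 (a b : R) : 1 - a < 1 - b -> 0 < a - b.
Proof. lra. Qed.

Lemma Hk_cust I J (E : 'I_I -> 'I_J -> bool) alpha beta :
  is_prob alpha -> is_prob beta -> connected_bip E -> CRP E alpha beta ->
  forall C, C != set0 -> C != setT -> 0 < kf E alpha beta C.
Proof.
move=> Ha Hb Hc Hcrp C HC0 HCT.
have J0 := prob_pos Hb.
rewrite /kf; case: (eqVneq (Sof E C) setT) => HS.
  rewrite HS msumT // (_ : msum alpha C = 1 - msum alpha (~: C)); last first.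
    by rewrite msumC // ; ring.
  apply: ar8; apply: msum_gt0; first by case: Ha.
  by apply: contra HCT => /eqP H; rewrite -(setCK C) H setC0.
have HS0 : Sof E C != set0.
  case/set0Pn: HC0 => i Hi; have := nbr_cust Hc J0 i; rewrite inE => /existsP[j /andP[_ Eij]].
  by apply/set0Pn; exists j; rewrite inE; apply/existsP; exists i; rewrite Hi.
have H := Hcrp _ HS0 HS.
apply: (ar7 _ H); apply: msum_sub; first by move=> x; apply: Rlt_le; case: Ha.
apply/subsetP => i Hi; rewrite inE inE; apply/negP => /existsP[j /andP[Hj Eij]].
move: Hj; rewrite inE inE => /negP; apply; apply/existsP; exists i; by rewrite Hi.
Qed.

Lemma Hk_serv I J (E : 'I_I -> 'I_J -> bool) alpha beta :
  is_prob alpha -> is_prob beta -> CRP E alpha beta ->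
  forall S, S != set0 -> S != setT -> 0 < kf (fun j i => E i j) beta alpha S.
Proof.
move=> Ha Hb Hcrp S HS0 HST.
have H : msum alpha (Uof E (~: S)) < msum beta (~: S).
  apply: Hcrp.
    by apply: contra HST => /eqP H; rewrite -(setCK S) H setC0.
  by apply: contra HS0 => /eqP H; rewrite -(setCK S) H setCT.
rewrite /Uof setCK msumC // msumC // in H.
exact: ar9 H.
Qed.

Theorem theorem5p3 (I J : nat) (E : 'I_I -> 'I_J -> bool)
  (alpha : 'I_I -> R) (beta : 'I_J -> R) :
  is_prob alpha -> is_prob beta -> connected_bip E ->
  CRP E alpha beta ->
  infinite_sum (states_weight E alpha beta) (Binv_servers E alpha beta) /\
  infinite_sum (states_weight E alpha beta) (Binv_customers E alpha beta).
Proof.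
move=> Ha Hb Hc Hcrp.
have I0 := prob_pos Ha; have J0 := prob_pos Hb.
split.
  rewrite Binv_tr //.
  apply: (is_ext (f := states_weight (fun j i => E i j) beta alpha)) => [n|].
    by rewrite sw_tr.
  apply: cust_main => //; first exact: nbr_cust.
  exact: Hk_serv.
apply: cust_main => //; first exact: nbr_serv.
exact: Hk_cust.
Qed.
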